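(* Let $n\geq 2$ and let $(A,\cdot,[\cdot,\ldots,\cdot])$ be a simple transposed Poisson $n$-Lie algebra. Then there is no nonzero proper subspace $I\subsetneq A$ such that $[I,A,\ldots,A]\subseteq I$ and $[A\cdot I,A,\ldots,A]\subseteq I$ (i.e. $A$ contains no nonzero quasi-ideals).
   Context: An $n$-Lie algebra is a vector space $L$ with an $n$-linear skew-symmetric bracket satisfying $[[x_1,\ldots,x_n],y_2,\ldots,y_n]=\sum_{i=1}^n[x_1,\ldots,x_{i-1},[x_i,y_2,\ldots,y_n],x_{i+1},\ldots,x_n]$. A transposed Poisson $n$-Lie algebra (over $\mathbb{C}$) is a triple $(A,\cdot,[\cdot,\ldots,\cdot])$ where $(A,\cdot)$ is commutative associative, $(A,[\cdot,\ldots,\cdot])$ is an $n$-Lie algebra, and $n\,h\,[a_1,\ldots,a_n]=\sum_{i=1}^n[a_1,\ldots,h a_i,\ldots,a_n]$ for all $h,a_i\in A$. An ideal of $(A,\cdot,[\cdot,\ldots,\cdot])$ is a subspace $J$ with $A\cdot J\subseteq J$ and $[J,A,\ldots,A]\subseteq J$; the algebra is simple if $[A,\ldots,A]\neq 0$ and its only ideals are $0$ and $A$. Here $[I,A,\ldots,A]$ denotes the span of all $[u,a_2,\ldots,a_n]$ with $u\in I$, $a_k\in A$, and $A\cdot I$ the span of all products $au$ with $a\in A,u\in I$. *)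

(* Defs.v *)
From HB Require Import structures.
From mathcomp Require Import all_boot all_order all_algebra all_fingroup.
From mathcomp Require Import complex reals.
Set Implicit Arguments. Unset Strict Implicit. Unset Printing Implicit Defensive.
Import Order.TTheory GRing.Theory Num.Theory.
Local Open Scope ring_scope.

Section Defs.
Variables (K : pzRingType) (V : lmodType K) (n : nat).

Definition subspace (S : V -> Prop) : Prop :=
  S 0 /\ (forall (a : K) (u v : V), S u -> S v -> S (a *: u + v)).

Definition span (S : V -> Prop) : V -> Prop :=
  fun v => forall W : V -> Prop, subspace W -> (forall u, S u -> W u) -> W v.

Definition subset (S T : V -> Prop) : Prop := forall v, S v -> T v.

Definition set_at (x : 'I_n -> V) (i : 'I_n) (v : V) : 'I_n -> V :=
  fun j => if j == i then v else x j.

(* the argument list (u, y_1, ..., y_{n-1}) *)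
Definition ins0 (u : V) (y : nat -> V) : 'I_n -> V :=
  fun j => if nat_of_ord j == 0%N then u else y (nat_of_ord j).

Variables (mul : V -> V -> V) (br : ('I_n -> V) -> V).

Definition comm_assoc_algebra : Prop :=
  [/\ forall (a : K) u v w, mul (a *: u + v) w = a *: mul u w + mul v w,
      forall u v, mul u v = mul v u &
      forall u v w, mul u (mul v w) = mul (mul u v) w].

Definition multilinear : Prop :=
  forall (x : 'I_n -> V) (i : 'I_n) (a : K) (u v : V),
    br (set_at x i (a *: u + v)) = a *: br (set_at x i u) + br (set_at x i v).

Definition skew_symmetric : Prop :=
  forall (x : 'I_n -> V) (i j : 'I_n), i != j ->
    br (fun k => x (tperm i j k)) = - br x.

Definition filippov : Prop :=
  forall (x : 'I_n -> V) (y : nat -> V),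
    br (ins0 (br x) y) = \sum_(i < n) br (set_at x i (br (ins0 (x i) y))).

Definition nLie : Prop := [/\ multilinear, skew_symmetric & filippov].

Definition transposed_compat : Prop :=
  forall (h : V) (a : 'I_n -> V),
    mul h (br a) *+ n = \sum_(i < n) br (set_at a i (mul h (a i))).

Definition TPnLie : Prop := [/\ comm_assoc_algebra, nLie & transposed_compat].

Definition brI (I : V -> Prop) : V -> Prop :=
  span (fun v => exists (u : V) (a : nat -> V), I u /\ v = br (ins0 u a)).

Definition mulI (I : V -> Prop) : V -> Prop :=
  span (fun v => exists (a u : V), I u /\ v = mul a u).

Definition ideal (J : V -> Prop) : Prop :=
  [/\ subspace J, subset (mulI J) J & subset (brI J) J].

Definition zero_set : V -> Prop := fun v => v = 0.
Definition full_set : V -> Prop := fun _ => True.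

Definition simple_TPnLie : Prop :=
  [/\ TPnLie, (exists x : 'I_n -> V, br x <> 0) &
      forall J, ideal J -> (forall v, J v <-> zero_set v) \/ (forall v, J v <-> full_set v)].

Definition quasi_ideal (I : V -> Prop) : Prop :=
  [/\ subspace I, subset (brI I) I & subset (brI (mulI I)) I].

End Defs.

(* Main.v *)
Require Import Defs.
From HB Require Import structures.
From mathcomp Require Import all_boot all_order all_algebra all_fingroup.
From mathcomp Require Import complex reals.
From Stdlib Require Import FunctionalExtensionality.
Import GRing.Theory Num.Theory.
Local Open Scope ring_scope.

Section Helpers.
Variables (K : pzRingType) (V : lmodType K).

Lemma span_sub (S : V -> Prop) : subspace (Defs.span S).
Proof.
split; first by move=> W [] .
by move=> a u v Hu Hv W HW HS; case: (HW) => _ H; apply: H; [apply: Hu|apply: Hv].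
Qed.

Lemma span_gen (S : V -> Prop) v : S v -> Defs.span S v.
Proof. by move=> Sv W _ H; apply: H. Qed.

Lemma span_min (S W : V -> Prop) : subspace W -> (forall u, S u -> W u) ->
  forall v, Defs.span S v -> W v.
Proof. by move=> HW HS v Hv; apply: Hv. Qed.

Lemma sub_add (S : V -> Prop) u v : subspace S -> S u -> S v -> S (u + v).
Proof. by case=> _ H Hu Hv; have := H 1 u v Hu Hv; rewrite scale1r. Qed.

Lemma sub_scale (S : V -> Prop) a u : subspace S -> S u -> S (a *: u).
Proof. by case=> H0 H Hu; have := H a u 0 Hu H0; rewrite addr0. Qed.

Lemma sub_sum (S : V -> Prop) m (F : 'I_m -> V) : subspace S ->
  (forall i, S (F i)) -> S (\sum_(i < m) F i).
Proof.
move=> HS HF; apply: (big_ind S); first by case: HS.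
  by move=> x y; apply: sub_add.
by move=> i _; apply: HF.
Qed.
End Helpers.
Arguments span_min {K V S} W.
Arguments span_sub {K V}.
Arguments span_gen {K V S}.
Arguments sub_add {K V S u v}.
Arguments sub_scale {K V S a u}.
Arguments sub_sum {K V S m F}.

Theorem mainTheorem4 (R : realType) (A : lmodType R[i]) (n : nat)
    (mul : A -> A -> A) (br : ('I_n -> A) -> A) :
  (2 <= n)%N ->
  simple_TPnLie mul br ->
  ~ (exists I : A -> Prop,
       quasi_ideal mul br I /\
       (exists v, I v /\ v <> 0) /\ (exists v, ~ I v)).
Proof.
move=> n2 [[[mlin mC mA] [blin bskew bfil] tcomp] [x0 Hx0] Hsimp].
move=> [I [[HIs HbI HbmI] [[v0 [Iv0 v0n0]] [v1 nIv1]]]].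
have n0 : (0 < n)%N by apply: leq_trans n2.
pose i0 : 'I_n := Ordinal n0.
have mul0l : forall w, mul 0 w = 0.
  move=> w; have := mlin 1 0 0 w; rewrite !scale1r addr0 => H.
  by apply: (addrI (mul 0 w)); rewrite addr0 -H.
have mulr_lin : forall (a : R[i]) u v w, mul w (a *: u + v) = a *: mul w u + mul w v.
  by move=> a u v w; rewrite mC mlin (mC u) (mC v).
have mulr0 : forall w, mul w 0 = 0 by move=> w; rewrite mC mul0l.
have badd : forall (x : 'I_n -> A) i u v,
    br (set_at x i (u + v)) = br (set_at x i u) + br (set_at x i v).
  move=> x i u v; have := blin x i 1 u v. idtac.
  rewrite scale1r => ->; by rewrite scale1r.
have ins0E : forall (u : A) (y : nat -> A), ins0 u y = set_at (ins0 0 y) i0 u.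
  move=> u y; apply: functional_extensionality => j.
  rewrite /ins0 /set_at; have -> : (j == i0) = (nat_of_ord j == 0%N) by [].
  by case: ifP.
have brE : forall a : 'I_n -> A,
    a = ins0 (a i0) (fun k => a (insubd i0 k)).
  move=> a; apply: functional_extensionality => j; rewrite /ins0.
  case: eqP => Hj.
    by congr a; apply: val_inj.
  by congr a; apply: val_inj; rewrite /= val_insubd ltn_ord.
have mulIsub : subspace (mulI mul I) by apply: span_sub.
have mulIclosed : forall w, mulI mul I w -> forall a, mulI mul I (mul a w).
  apply: (span_min (fun w => forall a, mulI mul I (mul a w))).
    split; first by move=> a; rewrite mulr0; case: mulIsub.
    move=> c u v Hu Hv a; rewrite mulr_lin; case: mulIsub => _ H; apply: H.
      by apply: Hu.
    by apply: Hv.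
  move=> u [b [w [Iw ->]]] a; apply: span_gen; exists (mul a b), w.
  by split=> //; rewrite mA.
pose J := fun v => exists u w, I u /\ mulI mul I w /\ v = u + w.
have HJs : subspace J.
  split; first by exists 0, 0; split; [case: HIs|split; [case: mulIsub|rewrite addr0]].
  move=> a u v [u1 [w1 [H1 [H2 ->]]]] [u2 [w2 [H3 [H4 ->]]]].
  exists (a *: u1 + u2), (a *: w1 + w2); split.
    by case: HIs => _ H; apply: H.
  split; first by case: mulIsub => _ H; apply: H.
  by rewrite scalerDr -!addrA; congr (_ + _); rewrite addrCA.
have bracketI : forall (u : A) (y : nat -> A), J u -> I (br (ins0 u y)).
  move=> u y [u1 [w1 [H1 [H2 ->]]]].
  rewrite ins0E badd -!ins0E.
  apply: (sub_add HIs).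
    by apply: HbI; apply: span_gen; exists u1, y.
  by apply: HbmI; apply: span_gen; exists w1, y.
have HJ : ideal mul br J.
  split=> //.
    apply: span_min => // v [a [u [[u1 [w1 [H1 [H2 ->]]]] ->]]].
    exists 0, (mul a u1 + mul a w1); split; first by case: HIs.
    split; last by have := mulr_lin 1 u1 w1 a; rewrite !scale1r => ->; rewrite add0r.
    apply: (sub_add mulIsub); last by apply: mulIclosed.
    by apply: span_gen; exists a, u1.
  apply: span_min => // v [u [y [Ju ->]]].
  exists (br (ins0 u y)), 0; split; first by apply: bracketI.
  by split; [case: mulIsub|rewrite addr0].
have Jfull : forall v, J v.
  case: (Hsimp J HJ) => H; last by move=> v; apply/H.
  exfalso; apply: v0n0; apply/H; exists v0, 0.
  by split=> //; split; [case: mulIsub|rewrite addr0].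
have allI : forall a, I (br a).
  by move=> a; rewrite (brE a); apply: bracketI.
pose Kb := Defs.span (fun v => exists a, v = br a).
have HKs : subspace Kb by apply: span_sub.
have nR : (n%:R : R[i]) != 0 by rewrite pnatr_eq0 -lt0n.
have Kmul : forall k, Kb k -> forall h, Kb (mul h k).
  apply: (span_min (fun k => forall h, Kb (mul h k))).
    split; first by move=> h; rewrite mulr0; case: HKs.
    move=> c u v Hu Hv h; rewrite mulr_lin; case: HKs => _ H; apply: H.
      by apply: Hu.
    by apply: Hv.
  move=> u [a ->] h.
  have -> : mul h (br a) = (n%:R)^-1 *: (mul h (br a) *+ n).
    by rewrite -[mul h (br a) *+ n]scaler_nat scalerA mulVf // scale1r.
  apply: (sub_scale HKs); rewrite tcomp; apply: (sub_sum HKs) => i.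
  by apply: span_gen; eexists.
have HK : ideal mul br Kb.
  split=> //.
    apply: span_min => // v [a [u [Ku ->]]]; by apply: Kmul.
  apply: span_min => // v [u [y [_ ->]]]; apply: span_gen; eexists; reflexivity.
case: (Hsimp Kb HK) => H.
  apply: Hx0; apply/H; apply: span_gen; eexists; reflexivity.
apply: nIv1; have : Kb v1 by apply/H.
by apply: span_min => // v [a ->].
Qed.
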